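(* Let $X\in\mathbb{R}^{n\times d}$, $y\in\mathbb{R}^n$, and let $g:\mathbb{R}^d\to(-\infty,\infty]$ be a proper lower semicontinuous convex function with $g(k\beta)=kg(\beta)$ for all $k\ge0$, $\beta\in\mathbb{R}^d$, such that there exists $\beta\in\mathrm{relint}(\mathrm{dom}(g))$ and $P(\beta):=\frac12\|y-X\beta\|_2^2+g(\beta)$ attains its infimum. Let $D(\theta)=-\frac12\|\theta\|_2^2+y^\top\theta-g^\star(X^\top\theta)$ be the Fenchel–Rockafellar dual objective and $\hat\theta$ a maximizer of $D$. Let $\tilde\beta\in\mathbb{R}^d$ and $\tilde\theta\in\mathrm{dom}(D)$. Then $\hat\theta$ belongs to \[ \mathcal{R}^{\mathrm{DS}}(\tilde\beta,\tilde\theta):=\Big\{\theta\ \Big|\ \Big\|\theta-\tfrac12(\tilde\theta+y)\Big\|_2^2\le\tfrac14\|\tilde\theta-y\|_2^2\ \land\ 0\le g(\tilde\beta)-\theta^\top X\tilde\beta\Big\}. \]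
   Context: $g^\star(v)=\sup_\beta v^\top\beta-g(\beta)$ is the Fenchel conjugate; $\mathrm{dom}(h)=\{z:|h(z)|<\infty\}$; $\mathrm{relint}$ is relative interior. *)

(* Defs.v *)
From HB Require Import structures.
From mathcomp Require Import all_boot all_order all_algebra.
From mathcomp Require Import all_classical all_reals all_analysis.
Set Implicit Arguments. Unset Strict Implicit. Unset Printing Implicit Defensive.
Import Order.TTheory GRing.Theory Num.Theory.
Import numFieldNormedType.Exports.
Local Open Scope classical_set_scope.
Local Open Scope ring_scope.

Definition dotv (R : realType) (n : nat) (u v : 'cV[R]_n) : R :=
  \sum_(i < n) u i 0 * v i 0.
Definition sqnorm (R : realType) (n : nat) (u : 'cV[R]_n) : R := dotv u u.

Definition edom (R : realType) (n : nat) (h : 'cV[R]_n -> \bar R) : set 'cV[R]_n :=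
  [set z | h z \is a fin_num].

Definition proper_fun (R : realType) (n : nat) (g : 'cV[R]_n -> \bar R) : Prop :=
  (forall b, g b != -oo%E) /\ (exists b, g b \is a fin_num).

Definition convex_efun (R : realType) (n : nat) (g : 'cV[R]_n -> \bar R) : Prop :=
  forall (a b : 'cV[R]_n) (t : R), 0 < t < 1 ->
    (g (t *: a + (1 - t) *: b)%R <= t%:E * g a + (1 - t)%:E * g b)%E.

Definition lsc_efun (R : realType) (n : nat) (g : 'cV[R]_n -> \bar R) : Prop :=
  forall a : R, closed [set b | (g b <= a%:E)%E].

Definition pos_homogeneous (R : realType) (n : nat) (g : 'cV[R]_n -> \bar R) : Prop :=
  forall (k : R) (b : 'cV[R]_n), 0 <= k -> g (k *: b)%R = (k%:E * g b)%E.

Definition affine_hull (R : realType) (n : nat) (C : set 'cV[R]_n) : set 'cV[R]_n :=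
  [set x | exists (m : nat) (pts : 'I_m -> 'cV[R]_n) (w : 'I_m -> R),
     (forall i, C (pts i)) /\ \sum_(i < m) w i = 1 /\ x = \sum_(i < m) w i *: pts i].

Definition relint (R : realType) (n : nat) (C : set 'cV[R]_n) : set 'cV[R]_n :=
  [set x | C x /\ exists e : R, 0 < e /\
     (forall z, affine_hull C z -> sqnorm (z - x) < e -> C z)].

Definition fconj (R : realType) (n : nat) (g : 'cV[R]_n -> \bar R) (v : 'cV[R]_n) : \bar R :=
  ereal_sup [set ((dotv v b)%:E - g b)%E | b in [set: 'cV[R]_n]].

Definition primal (R : realType) (n d : nat) (X : 'M[R]_(n, d)) (y : 'cV[R]_n)
  (g : 'cV[R]_d -> \bar R) (b : 'cV[R]_d) : \bar R :=
  ((sqnorm (y - X *m b) / 2)%:E + g b)%E.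

Definition dual (R : realType) (n d : nat) (X : 'M[R]_(n, d)) (y : 'cV[R]_n)
  (g : 'cV[R]_d -> \bar R) (th : 'cV[R]_n) : \bar R :=
  ((- (sqnorm th / 2) + dotv y th)%:E - fconj g (X^T *m th))%E.

(* Main.v *)
Require Import Defs.
From HB Require Import structures.
From mathcomp Require Import all_boot all_order all_algebra.
From mathcomp Require Import all_classical all_reals all_analysis.
From mathcomp Require Import ring lra.
Import Order.TTheory GRing.Theory Num.Theory.
Local Open Scope classical_set_scope.
Local Open Scope ring_scope.

Section Aux.
Variable R : realType.

Lemma dotvE {m : nat} (u v : 'cV[R]_m) : dotv u v = (u^T *m v) 0 0.
Proof. by rewrite /dotv mxE; apply: eq_bigr => i _; rewrite mxE. Qed.

Lemma dotvZr {m : nat} (u v : 'cV[R]_m) k : dotv u (k *: v) = k * dotv v u.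
Proof.
rewrite /dotv. rewrite mulr_sumr; apply: eq_bigr => i _; rewrite mxE; ring.
Qed.

Lemma dotv_lin {m : nat} (u v b : 'cV[R]_m) t :
  dotv (u + t *: (v - u)) b = dotv u b + t * (dotv v b - dotv u b).
Proof.
rewrite /dotv -sumrB mulr_sumr -big_split; apply: eq_bigr => i _.
rewrite !mxE /=; ring.
Qed.

Lemma dotv_tr {m p : nat} (X : 'M[R]_(m, p)) th b :
  dotv (X^T *m th) b = dotv th (X *m b).
Proof. by rewrite !dotvE trmx_mul trmxK mulmxA. Qed.

Lemma mulmxZr' {m p q : nat} (A : 'M[R]_(m, p)) (B : 'M[R]_(p, q)) a :
  A *m (a *: B) = a *: (A *m B).
Proof.
apply/matrixP => i j; rewrite !mxE mulr_sumr; apply: eq_bigr => k _.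
rewrite !mxE; ring.
Qed.

Definition inK {m : nat} (g : 'cV[R]_m -> \bar R) v :=
  forall b, ((dotv v b)%:E <= g b)%E.

Lemma g0 {m : nat} (g : 'cV[R]_m -> \bar R) :
  pos_homogeneous g -> g 0 = 0%E.
Proof. by move=> h; rewrite -(scale0r (0 : 'cV[R]_m)) h // mul0e. Qed.

Lemma fconj_inK {m : nat} (g : 'cV[R]_m -> \bar R) v :
  pos_homogeneous g -> (forall b, g b != -oo%E) -> inK g v -> fconj g v = 0%E.
Proof.
move=> hh hp hK; apply/le_anti/andP; split.
  apply: ge_ereal_sup => _ [b _ <-].
  move: (hK b) (hp b); case: (g b) => [r| |] //=.
    by rewrite lee_fin -EFinB lee_fin => H _; lra.
  by rewrite /= leNye.
apply: ereal_sup_ubound; exists 0 => //.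
by rewrite g0 // /dotv big1 ?sube0 // => i _; rewrite mxE mulr0.
Qed.

Lemma inK_fconj {m : nat} (g : 'cV[R]_m -> \bar R) v :
  pos_homogeneous g -> (forall b, g b != -oo%E) -> fconj g v != +oo%E -> inK g v.
Proof.
move=> hh hp hf.
have [c Hc] : exists c : R, (fconj g v <= c%:E)%E.
  move: hf; case: (fconj g v) => [r| |] // _; first by exists r.
  by exists 0; rewrite leNye.
move=> b; rewrite leNgt; apply/negP => Hlt.
move: (hp b) Hlt; case E: (g b) => [r| |] //= _; rewrite ?lte_fin => Hlt.
  set s := dotv v b in Hlt.
  pose k := (`|c| + 1) / (s - r).
  have kpos : 0 <= k by rewrite /k divr_ge0 // ?subr_ge0 ?ltW //; lra.
  have : (((dotv v (k *: b))%:E - g (k *: b)) <= fconj g v)%E.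
    by apply: ereal_sup_ubound; exists (k *: b).
  rewrite hh // E dotvZr -EFinM -EFinB => H.
  have := le_trans H Hc; rewrite lee_fin.
  have -> : k * dotv b v - k * r = `|c| + 1.
    rewrite /k.
    have -> : dotv b v = s by rewrite /s /dotv; apply: eq_bigr => i _; rewrite mulrC.
    have : s - r != 0 by rewrite subr_eq0 gt_eqF.
    move=> Hn; rewrite -mulrBr mulrAC -mulrA mulfV // mulr1.
    by [].
  have := ler_norm c; lra.
Qed.

End Aux.
Arguments inK {R m}.

Theorem theorem6 (R : realType) (n d : nat) (X : 'M[R]_(n, d)) (y : 'cV[R]_n)
  (g : 'cV[R]_d -> \bar R)
  (g_proper : proper_fun g) (g_lsc : lsc_efun g) (g_convex : convex_efun g)
  (g_hom : pos_homogeneous g)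
  (relint_ne : exists b, relint (edom g) b)
  (P_attains : exists b0, forall b, (primal X y g b0 <= primal X y g b)%E)
  (theta_hat : 'cV[R]_n)
  (theta_hat_max : forall th, (dual X y g th <= dual X y g theta_hat)%E)
  (beta_t : 'cV[R]_d) (theta_t : 'cV[R]_n)
  (theta_t_dom : edom (dual X y g) theta_t) :
  sqnorm (theta_hat - 2^-1 *: (theta_t + y)) <= 4^-1 * sqnorm (theta_t - y) /\
  (0%:E <= g beta_t - (dotv theta_hat (X *m beta_t))%:E)%E.
Proof.
have hp := g_proper.1.
pose F (th : 'cV[R]_n) := - (sqnorm th / 2) + dotv y th.
have dualE : forall th, inK g (X^T *m th) -> dual X y g th = (F th)%:E.
  by move=> th hK; rewrite /dual fconj_inK // sube0.
have Kt : inK g (X^T *m theta_t).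
  apply: inK_fconj => //; apply/negP => /eqP E.
  by move: theta_t_dom; rewrite /edom /= /dual E.
have Kh : inK g (X^T *m theta_hat).
  apply: inK_fconj => //; apply/negP => /eqP E.
  by have := theta_hat_max theta_t; rewrite dualE // /dual E /= leeNy_eq.
split; last first.
  have := Kh beta_t; rewrite dotv_tr => H.
  by rewrite sube_ge0 // fin_numE.
pose S := \sum_(i < n) (theta_hat i 0 - y i 0) * (theta_t i 0 - theta_hat i 0).
pose W := \sum_(i < n) (theta_t i 0 - theta_hat i 0) ^+ 2.
have W0 : 0 <= W by apply: sumr_ge0 => i _; exact: sqr_ge0.
have Fsum : forall th, F th = \sum_(i < n) (- (th i 0 * th i 0) / 2 + y i 0 * th i 0).
  move=> th; rewrite /F /sqnorm /dotv mulr_suml -sumrN -big_split.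
  by apply: eq_bigr => i _ /=; ring.
have tS : forall t, 0 < t <= 1 -> 0 <= S + t / 2 * W.
  move=> t /andP[t0 t1].
  have Kth : inK g (X^T *m (theta_hat + t *: (theta_t - theta_hat))).
    move=> b; rewrite mulmxDr mulmxZr' mulmxBr dotv_lin.
    move: (Kh b) (Kt b) (hp b); case: (g b) => [r| |] //=; rewrite ?leey //.
    rewrite !lee_fin => h1 h2 _; nra.
  have := theta_hat_max (theta_hat + t *: (theta_t - theta_hat)).
  rewrite !dualE // lee_fin.
  have -> : F (theta_hat + t *: (theta_t - theta_hat)) = F theta_hat - (t * S + t ^+ 2 / 2 * W).
    have E : F (theta_hat + t *: (theta_t - theta_hat)) - F theta_hat + (t * S + t ^+ 2 / 2 * W) = 0.
      rewrite !Fsum -sumrB /S /W !mulr_sumr -!big_split /=.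
      by apply: big1 => i _; rewrite !mxE /=; field.
    lra.
  move=> H.
  have : 0 <= t * (S + t / 2 * W) by rewrite mulrDr; lra.
  by rewrite pmulr_rge0.
have S0 : 0 <= S.
  rewrite leNgt; apply/negP => Sneg.
  have den : 0 < - S + W by lra.
  pose t := - S / (- S + W).
  have t0 : 0 < t by rewrite divr_gt0 //; lra.
  have t1 : t <= 1 by rewrite ler_pdivrMr // mul1r; lra.
  have tW : t * (- S + W) = - S by rewrite /t divfK // gt_eqF.
  have := tS t; rewrite t0 t1 => /(_ isT) H.
  have : t * S < 0 by rewrite pmulr_rlt0.
  nra.
have -> : sqnorm (theta_hat - 2^-1 *: (theta_t + y)) = 4^-1 * sqnorm (theta_t - y) - S.
  apply/eqP; rewrite -subr_eq0 /sqnorm /dotv /S mulr_sumr -!sumrB.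
  apply/eqP; apply: big1 => i _; rewrite !mxE /=; field.
  by [].
lra.
Qed.
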